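(* Let $X$ be an $n$-dimensional real normed space and let $Y \subseteq X$ be a linear subspace of dimension $k$, where $1 \leq k \leq n-1$. Suppose that $x_0 \in X \setminus Y$ and $\{f_1, f_2, \ldots, f_l\} \subseteq \mathrm{ext}\, B_{X^*}$ is a minimal $I$-set for $Y$ with respect to $x_0$, where $l \geq 2$. Then the functionals $f_1|_Y, f_2|_Y, \ldots, f_{l-1}|_Y$ are linearly independent in $Y^*$.
   Context: $P_Y(x)=\{y\in Y:\|x-y\|=\mathrm{dist}(x,Y)\}$ is the set of best approximations of $x$ in $Y$. For $x_0\in X\setminus Y$, a set of functionals $\{f_1,\dots,f_l\}\subseteq \mathrm{ext}\,B_{X^*}$ (extreme points of the dual unit ball) is an $I$-set for $Y$ with respect to $x_0$ if there exist $y_0\in P_Y(x_0)$ and positive reals $\alpha_1,\dots,\alpha_l$ with $\sum_i\alpha_i=1$ such that $f_i(x_0-y_0)=\|x_0-y_0\|$ for all $i$ and $\sum_{i=1}^l\alpha_i f_i(y)=0$ for all $y\in Y$. An $I$-set is minimal if no proper subset of it is an $I$-set for $Y$ with respect to $x_0$. *)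

(* Defs.v *)
From HB Require Import structures.
From mathcomp Require Import all_boot all_order all_algebra.
From mathcomp Require Import classical_sets reals.
Set Implicit Arguments.
Unset Strict Implicit.
Unset Printing Implicit Defensive.
Import Order.TTheory GRing.Theory Num.Theory.
Local Open Scope ring_scope.

Section Defs.
Variables (R : realType) (X : vectType R).

Definition is_norm (N : X -> R) : Prop :=
  [/\ forall x y, N (x + y) <= N x + N y,
      forall (a : R) x, N (a *: x) = `|a| * N x
    & forall x, N x = 0 -> x = 0].

(* dual space X^* = 'Hom(X, R^o); closed unit ball of X^* w.r.t. the dual norm *)
Definition in_dual_ball (N : X -> R) (f : 'Hom(X, R^o)) : Prop :=
  forall x, `|(f x : R)| <= N x.

Definition ext_dual_ball (N : X -> R) (f : 'Hom(X, R^o)) : Prop :=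
  in_dual_ball N f /\
  forall (g h : 'Hom(X, R^o)) (t : R), 0 < t < 1 ->
    in_dual_ball N g -> in_dual_ball N h ->
    f = t *: g + (1 - t) *: h -> g = h.

Definition dist_sub (N : X -> R) (x : X) (Y : {vspace X}) : R :=
  inf [set N (x - y) | y in [set y : X | y \in Y]].

Definition best_approx (N : X -> R) (Y : {vspace X}) (x : X) : set X :=
  [set y : X | y \in Y /\ N (x - y) = dist_sub N x Y].

Definition is_Iset_on (N : X -> R) (Y : {vspace X}) (x0 : X)
    (I : finType) (f : I -> 'Hom(X, R^o)) (S : {set I}) : Prop :=
  (forall i, i \in S -> ext_dual_ball N (f i)) /\
  exists y0 : X, best_approx N Y x0 y0 /\
  exists alpha : I -> R,
    [/\ forall i, i \in S -> 0 < alpha i,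
        \sum_(i in S) alpha i = 1,
        forall i, i \in S -> (f i (x0 - y0) : R) = N (x0 - y0)
      & forall y, y \in Y -> \sum_(i in S) alpha i * (f i y : R) = 0].

Definition is_minimal_Iset (N : X -> R) (Y : {vspace X}) (x0 : X)
    (I : finType) (f : I -> 'Hom(X, R^o)) : Prop :=
  is_Iset_on N Y x0 f [set: I]%SET /\
  forall S : {set I}, S \proper [set: I]%SET -> ~ is_Iset_on N Y x0 f S.

Definition restr (Y : {vspace X}) (f : 'Hom(X, R^o)) : 'Hom(subvs_of Y, R^o) :=
  (f \o linfun (@vsval _ _ Y))%VF.

End Defs.

(* Main.v *)
Require Import Defs.
From HB Require Import structures.
From mathcomp Require Import all_boot all_order all_algebra.
From mathcomp Require Import classical_sets reals.
From mathcomp Require Import ring lra.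
Import Order.TTheory GRing.Theory Num.Theory.
Local Open Scope ring_scope.

Lemma key_pos (R : realType) (X : vectType R) (N : X -> R) (Y : {vspace X}) (x0 : X)
  (I : finType) (f : I -> 'Hom(X, R^o)) (c : I -> R) (i0 : I) :
  is_minimal_Iset N Y x0 f ->
  (forall y, y \in Y -> \sum_i c i * (f i y : R) = 0) -> c i0 = 0 ->
  forall j, 0 < c j -> False.
Proof.
move=> [[ext [y0 [by0 [alpha [apos asum aeq aY]]]]] minS] hc hi0 j cj.
have aY' y : y \in Y -> \sum_i alpha i * (f i y : R) = 0.
  move=> yY; rewrite -[RHS](aY y yY); apply: eq_bigl => i; by rewrite inE.
have apos' i : 0 < alpha i by apply: apos; rewrite inE.
pose m := Order.arg_min j (fun i => 0 < c i) (fun i => alpha i / c i).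
have [cm mmin] : 0 < c m /\ forall i, 0 < c i -> alpha m / c m <= alpha i / c i.
  by rewrite /m; case: Order.TotalTheory.arg_minP => // i ci H; split=> // i' /H.
pose t := alpha m / c m.
have t0 : 0 < t by apply: divr_gt0.
pose beta i := alpha i - t * c i.
have beta_ge0 i : 0 <= beta i.
  rewrite /beta subr_ge0; case: (ltrP 0 (c i)) => ci.
    by rewrite -ler_pdivlMr // mmin.
  apply: le_trans (ltW (apos' i)); by rewrite pmulr_rle0.
have betam : beta m = 0 by rewrite /beta /t divfK ?subrr // gt_eqF.
pose S := [set i | 0 < beta i].
have sum_beta (g : I -> R) : \sum_i beta i * g i = \sum_(i in S) beta i * g i.
  rewrite [RHS]big_mkcond; apply: eq_bigr => i _; rewrite inE.
  case: ifP => // /negbT; rewrite -leNgt => b0.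
  have -> : beta i = 0 by apply/eqP; rewrite eq_le b0 beta_ge0.
  by rewrite mul0r.
have i0S : i0 \in S by rewrite inE /beta hi0 mulr0 subr0.
pose s := \sum_(i in S) beta i.
have s0 : 0 < s.
  rewrite /s (bigD1 i0) //=; have := i0S; rewrite inE => b0.
  have : 0 <= \sum_(i in S | i != i0) beta i by apply: sumr_ge0.
  lra.
apply: (minS S).
  rewrite properT; apply/negP => /eqP ST.
  have : m \in S by rewrite ST inE.
  by rewrite inE betam ltxx.
split; first by move=> i _; apply: ext; rewrite inE.
exists y0; split=> //; exists (fun i => beta i / s); split.
- by move=> i; rewrite inE => bi; apply: divr_gt0.
- by rewrite -mulr_suml divff // gt_eqF.
- by move=> i _; apply: aeq; rewrite inE.
move=> y yY.
rewrite (eq_bigr (fun i => s^-1 * (beta i * (f i y : R)))); last first.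
  by move=> i _; rewrite mulrAC mulrC.
rewrite -mulr_sumr -sum_beta.
have -> : \sum_i beta i * (f i y : R) =
   \sum_i alpha i * (f i y : R) - t * \sum_i c i * (f i y : R).
  rewrite mulr_sumr -sumrB; apply: eq_bigr => i _; rewrite /beta; ring.
by rewrite aY' // hc // mulr0 subr0 mulr0.
Qed.

Lemma key (R : realType) (X : vectType R) (N : X -> R) (Y : {vspace X}) (x0 : X)
  (I : finType) (f : I -> 'Hom(X, R^o)) (c : I -> R) (i0 : I) :
  is_minimal_Iset N Y x0 f ->
  (forall y, y \in Y -> \sum_i c i * (f i y : R) = 0) -> c i0 = 0 ->
  forall j, c j = 0.
Proof.
move=> hm hc hi0 j; case: (ltrgtP (c j) 0) => // cj; exfalso.
  have hc' : forall y, y \in Y -> \sum_i (- c i) * (f i y : R) = 0.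
    move=> y yY; rewrite (eq_bigr (fun i => - (c i * (f i y : R)))).
      by rewrite sumrN hc // oppr0.
    by move=> i _; rewrite mulNr.
  have hi0' : - c i0 = 0 by rewrite hi0 oppr0.
  have cj' : 0 < - c j by rewrite oppr_gt0.
  exact: (@key_pos _ _ _ _ _ _ _ (fun i => - c i) i0 hm hc' hi0' j cj').
by case: (@key_pos _ _ _ _ _ _ _ c i0 hm hc hi0 j cj).
Qed.

Theorem mainTheorem13 (R : realType) (X : vectType R) (N : X -> R)
    (n k l : nat) (Y : {vspace X}) (x0 : X) (f : 'I_l -> 'Hom(X, R^o)) :
  is_norm N ->
  \dim {: X} = n ->
  \dim Y = k ->
  (1 <= k)%N -> (k <= n - 1)%N ->
  x0 \notin Y ->
  (2 <= l)%N ->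
  injective f ->
  is_minimal_Iset N Y x0 f ->
  free [seq restr Y (f (widen_ord (leq_pred l) i)) | i <- enum 'I_l.-1].
Proof.
move=> _ _ _ _ _ _; case: l f => [|[|l']] f // _ _ hmin /=.
set s := [seq _ | i <- _].
have ss : size s = l'.+1 by rewrite size_map size_enum_ord.
suff : free (in_tuple s) by [].
apply/freeP => kc hk i.
pose kk m := oapp kc 0 (insub m : option 'I_(size s)).
have kkE (j : 'I_(size s)) : kc j = kk j by rewrite /kk valK.
pose c (j : 'I_l'.+2) := kk j.
have hc : forall y, y \in Y -> \sum_j c j * (f j y : R) = 0.
  move=> y yY.
  have := congr1 (fun g : 'Hom(subvs_of Y, R^o) => g (vsproj Y y)) hk.
  rewrite sum_lfunE zero_lfunE => H; rewrite -[RHS]H; clear H.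
  rewrite big_ord_recr /= {2}/c /kk insubF; last by rewrite ss ltnn.
  rewrite /= mul0r addr0.
  rewrite (eq_bigr (fun m : 'I_(size s) => (kk m *: s`_m) (vsproj Y y))); last first.
    by move=> m _; rewrite kkE.
  rewrite -(big_mkord xpredT (fun m => (kk m *: s`_m) (vsproj Y y))) ss big_mkord.
  apply: eq_bigr => m _.
  rewrite scale_lfunE /s (nth_map ord0); last by rewrite size_enum_ord.
  rewrite /restr comp_lfunE lfunE /= vsprojK //.
  have -> : nth ord0 (enum 'I_l'.+1) m = m by apply: val_inj; rewrite /= nth_enum_ord.
  have -> : widen_ord (leq_pred l'.+2) m = widen_ord (leqnSn _) m by apply: val_inj.
  by [].
have := @key _ _ _ _ _ _ _ c ord_max hmin hc.
rewrite {1}/c /kk insubF; last by rewrite ss ltnn.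
move=> /(_ erefl (inord i)).
rewrite kkE /c inordK // -ss; exact: leqW.
Qed.
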